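(* Let $m \le n$, let $1 \le h \le k \le m$, and let $X$ be any linear operator on $\mathcal{H}_n \otimes \mathcal{H}_m$. Then \[ \|X\|_{S(h)} \le \|X\|_{S(k)} \le \frac{k}{h}\|X\|_{S(h)}. \]
   Context: $\mathcal{H}_d = \mathbb{C}^d$ and $m\le n$. $SR$ denotes Schmidt rank, i.e. the number of nonzero singular values of the coefficient matrix of a vector in $\mathcal{H}_n\otimes\mathcal{H}_m$. For $1\le k\le m$, \[ \|X\|_{S(k)} := \sup\{|\langle w|X|v\rangle| : |v\rangle,|w\rangle \text{ unit vectors}, SR(|v\rangle),SR(|w\rangle)\le k\}. \] *)

(* Defs.v *)
From HB Require Import structures.
From mathcomp Require Import all_boot all_order all_algebra.
From mathcomp Require Import boolp classical_sets reals.
From mathcomp.real_closed Require Import complex.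
Set Implicit Arguments. Unset Strict Implicit. Unset Printing Implicit Defensive.
Import Order.TTheory GRing.Theory Num.Theory.
Local Open Scope ring_scope.
Local Open Scope classical_set_scope.

(* Vectors of H_n (x) H_m = C^(n*m) are column vectors 'cV[R[i]]_(n*m); the
   basis vector e_i (x) f_j has index i*m + j (mxvec_index convention). *)

Definition coef_mx (R : rcfType) (n m : nat) (v : 'cV[R[i]]_(n * m)) : 'M[R[i]]_(n, m) :=
  vec_mx v^T.

(* Schmidt rank: number of nonzero singular values = rank of coefficient matrix *)
Definition schmidt_rank (R : rcfType) (n m : nat) (v : 'cV[R[i]]_(n * m)) : nat :=
  \rank (coef_mx v).

Definition sqnorm (R : rcfType) (d : nat) (v : 'cV[R[i]]_d) : R :=
  \sum_(i < d) Normc.normc (v i 0) ^+ 2.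

Definition unit_vec (R : rcfType) (d : nat) (v : 'cV[R[i]]_d) : Prop :=
  sqnorm v = 1.

Definition braket (R : rcfType) (d : nat) (w : 'cV[R[i]]_d) (X : 'M[R[i]]_d)
  (v : 'cV[R[i]]_d) : R[i] :=
  ((map_mx conjc w)^T *m X *m v) 0 0.

Definition normS (R : realType) (n m k : nat) (X : 'M[R[i]]_(n * m)) : R :=
  sup [set r : R | exists v w : 'cV[R[i]]_(n * m),
         [/\ unit_vec v, unit_vec w, (schmidt_rank v <= k)%N,
             (schmidt_rank w <= k)%N & r = Normc.normc (braket w X v)]].

(* Main.v *)
Require Import Defs.
From HB Require Import structures.
From mathcomp Require Import all_boot all_order all_algebra.
From mathcomp Require Import boolp classical_sets reals.
From mathcomp.real_closed Require Import complex.
From mathcomp Require Import sesquilinear spectral.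
From mathcomp Require Import ring.
Import Order.TTheory GRing.Theory Num.Theory.
Local Open Scope ring_scope.
Set Implicit Arguments. Unset Strict Implicit. Unset Printing Implicit Defensive.
Local Open Scope sesquilinear_scope.
Local Notation "x %:C" := (real_complex _ x) (format "x %:C") : ring_scope.
Section Dec.
Variable R : realType.
Local Notation C := (R[i]).

Lemma conjcE (z : R[i]) : conjc z = (z^*)%R.
Proof.
rewrite [in RHS](Crect z) rmorphD rmorphM /= conjCi.
rewrite !conj_Creal ?Creal_Re ?Creal_Im //.
by rewrite -complexRe -complexIm; case: z => a b /=; simpc.
Qed.

Lemma normcE (z : R[i]) : (Normc.normc z)%:C = `|z|.
Proof. by case: z => a b; rewrite normc_def. Qed.

Lemma sum_rowtr k m (A : 'M[C]_(k, m)) :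
  \sum_(j < k) (row j A)^t* *m row j A = A^t* *m A.
Proof.
apply/matrixP => a b; rewrite summxE !mxE; apply: eq_bigr => j _.
rewrite !mxE big_ord1 !mxE. by [].
Qed.

Lemma decomp_mx n m k (M : 'M[C]_(n, m)) : (\rank M <= k)%N ->
  exists S : 'M[C]_(k, m),
    M *m S^t* *m S = M /\ forall i j, i != j -> (S *m S^t*) i j = 0.
Proof.
move=> rk.
set r := \rank M.
have rm : (r <= m)%N by apply: rank_leq_col.
set S := schmidt (row_base M).
have Su : S \is unitarymx by apply: schmidt_unitarymx.
have MS : (M <= S)%MS.
  by rewrite eqmx_schmidt_free ?row_base_free // eq_row_base.
have [Y defM] := submxP MS.
set E : 'M[C]_(k, r) := pid_mx r.
have EtE : E^t* *m E = 1%:M.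
  by rewrite /E tr_pid_mx map_pid_mx mul_pid_mx !minnn (minn_idPr rk) pid_mx_1.
exists (E *m S); split.
  rewrite trmx_mul map_mxM !mulmxA.
  rewrite -[M *m S^t* *m E^t* *m E]mulmxA EtE mulmx1.
  have -> : M *m S^t* *m S = Y *m S *m S^t* *m S by rewrite -defM.
  by rewrite -[Y *m S *m _]mulmxA (unitarymxP Su) mulmx1 -defM.
move=> i j ij.
rewrite trmx_mul map_mxM !mulmxA -[E *m S *m _]mulmxA (unitarymxP Su) mulmx1.
rewrite /E tr_pid_mx map_pid_mx mul_pid_mx mxE.
have -> : (nat_of_ord i == nat_of_ord j) = false by apply/negbTE.
by [].
Qed.

Definition ip d (x y : 'cV[C]_d) : C := \sum_(l < d) (x l 0)^* * y l 0.

Lemma sum_mxvec (V : nmodType) n m (F : 'I_(n * m) -> V) :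
  \sum_l F l = \sum_(i < n) \sum_(j < m) F (mxvec_index i j).
Proof.
rewrite pair_bigA /=.
rewrite (reindex (uncurry (@mxvec_index n m))) /=; last first.
  exact: curry_mxvec_bij.
by apply: eq_bigr => -[i j] _.
Qed.

Lemma ip_mxvec n m (A B : 'M[C]_(n, m)) :
  ip (mxvec A)^T (mxvec B)^T = \sum_i \sum_j (A i j)^* * B i j.
Proof.
rewrite /ip sum_mxvec; apply: eq_bigr => i _; apply: eq_bigr => j _.
by rewrite !mxE !mxvecE.
Qed.

Lemma coef_mxvec n m (A : 'M[C]_(n, m)) : coef_mx (mxvec A)^T = A.
Proof. by rewrite /coef_mx trmxK mxvecK. Qed.

Lemma mxvec_coef n m (v : 'cV[C]_(n * m)) : (mxvec (coef_mx v))^T = v.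
Proof. by rewrite /coef_mx vec_mxK trmxK. Qed.

Lemma decomp_vec n m k (v : 'cV[C]_(n * m)) : (schmidt_rank v <= k)%N ->
  exists t : 'I_k -> 'cV[C]_(n * m),
    [/\ forall j, (schmidt_rank (t j) <= 1)%N, v = \sum_j t j &
        forall i j, i != j -> ip (t i) (t j) = 0].
Proof.
move=> rk; have [S [MS Sorth]] := decomp_mx rk.
set M := coef_mx v in MS.
pose T j := M *m ((row j S)^t* *m row j S).
exists (fun j => (mxvec (T j))^T); split.
- move=> j; rewrite /schmidt_rank coef_mxvec /T mulmxA.
  by apply: leq_trans (mxrankM_maxr _ _) (rank_leq_row _).
- rewrite -(raddf_sum (@trmx _ _ _)) -(raddf_sum mxvec) /T -mulmx_sumr sum_rowtr.
  by rewrite mulmxA MS /M /= mxvec_coef.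
move=> i j ij; rewrite ip_mxvec.
have TE l a b : T l a b = (M *m (row l S)^t*) a 0 * S l b.
  by rewrite /T mulmxA [LHS]mxE big_ord1 [row _ _ _ _]mxE.
under eq_bigr => a _ do under eq_bigr => b _ do
  rewrite !TE rmorphM /= mulrACA.
suff Z : \sum_(b < m) (S i b)^* * S j b = 0.
  by rewrite big1 // => a _; rewrite -big_distrr /= Z mulr0.
transitivity ((S *m S^t*) j i); last by apply: Sorth; rewrite eq_sym.
rewrite mxE; apply: eq_bigr => b _; rewrite !mxE mulrC.
by [].
Qed.

Lemma ip_sumr d (I : finType) (x : 'cV[C]_d) (F : I -> 'cV[C]_d) :
  ip x (\sum_i F i) = \sum_i ip x (F i).
Proof.
rewrite /ip exchange_big /=; apply: eq_bigr => l _.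
by rewrite summxE mulr_sumr.
Qed.

Lemma ip_suml d (I : finType) (y : 'cV[C]_d) (F : I -> 'cV[C]_d) :
  ip (\sum_i F i) y = \sum_i ip (F i) y.
Proof.
rewrite /ip exchange_big /=; apply: eq_bigr => l _.
by rewrite summxE rmorph_sum mulr_suml.
Qed.

Lemma ip_scaler d (x y : 'cV[C]_d) c : ip x (c *: y) = c * ip x y.
Proof.
rewrite /ip mulr_sumr; apply: eq_bigr => l _; rewrite mxE.
by rewrite mulrCA.
Qed.

Lemma ip_scalel d (x y : 'cV[C]_d) c : ip (c *: x) y = c^* * ip x y.
Proof.
rewrite /ip mulr_sumr; apply: eq_bigr => l _; rewrite mxE rmorphM /=.
by rewrite mulrA.
Qed.

Lemma sqnormE d (x : 'cV[C]_d) : (sqnorm x)%:C = ip x x.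
Proof.
rewrite /sqnorm /ip rmorph_sum; apply: eq_bigr => l _.
rewrite rmorphXn /= normcE sqr_normc conjcE mulrC.
by [].
Qed.

Definition rot k (kp : (0 < k)%N) (a : 'I_k) (i : nat) : 'I_k :=
  Ordinal (ltn_pmod (a + i) kp).

Lemma rot_inj_i k (kp : (0 < k)%N) a (i j : nat) :
  (i < k)%N -> (j < k)%N -> rot kp a i = rot kp a j -> i = j.
Proof.
move=> ik jk /(congr1 val) /= /eqP; rewrite eqn_modDl !modn_small //.
by move/eqP.
Qed.

Lemma rot_inj_a k (kp : (0 < k)%N) (i : nat) : injective (fun a => rot kp a i).
Proof.
move=> a b /(congr1 val) /= /eqP; rewrite eqn_modDr !modn_small //.
by move/eqP/val_inj.
Qed.

Lemma sum_rot (V : nmodType) k h (kp : (0 < k)%N) (F : 'I_k -> V) :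
  \sum_(a < k) \sum_(i < h) F (rot kp a i) = (\sum_j F j) *+ h.
Proof.
rewrite exchange_big /=.
rewrite (eq_bigr (fun _ => \sum_j F j)); last first.
  by move=> i _; rewrite [RHS](reindex_inj (@rot_inj_a _ kp i)).
by rewrite sumr_const card_ord.
Qed.

Lemma ip_diag d k (I : finType) (t : 'I_k -> 'cV[C]_d) (f : I -> 'I_k) :
  (forall i j, i != j -> ip (t i) (t j) = 0) -> injective f ->
  ip (\sum_i t (f i)) (\sum_i t (f i)) = \sum_i ip (t (f i)) (t (f i)).
Proof.
move=> orth finj; rewrite ip_suml; apply: eq_bigr => i _.
rewrite ip_sumr (bigD1 i) //= big1 ?addr0 // => j ji.
by apply: orth; apply: contra ji => /eqP/finj ->.
Qed.

Lemma window_ip d k h (kp : (0 < k)%N) (hk : (h <= k)%N)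
  (t : 'I_k -> 'cV[C]_d) :
  (forall i j, i != j -> ip (t i) (t j) = 0) ->
  \sum_(a < k) ip (\sum_(i < h) t (rot kp a i)) (\sum_(i < h) t (rot kp a i))
  = h%:R * ip (\sum_j t j) (\sum_j t j).
Proof.
move=> orth.
rewrite (eq_bigr (fun a => \sum_(i < h) ip (t (rot kp a i)) (t (rot kp a i)))).
  rewrite (@sum_rot _ k h kp (fun j => ip (t j) (t j))) mulr_natl; congr (_ *+ _).
  by rewrite (@ip_diag d k _ t id) //.
move=> a _; apply: (@ip_diag d k _ t (fun i : 'I_h => rot kp a i)) => //.
move=> i j /(rot_inj_i (leq_trans (ltn_ord i) hk) (leq_trans (ltn_ord j) hk)).
exact: val_inj.
Qed.

Lemma window_sum d k h (kp : (0 < k)%N) (t : 'I_k -> 'cV[C]_d) :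
  \sum_(a < k) \sum_(i < h) t (rot kp a i) = h%:R *: \sum_j t j.
Proof. by rewrite sum_rot scaler_nat. Qed.

Lemma coef_mx_sum n m (I : finType) (F : I -> 'cV[C]_(n * m)) :
  coef_mx (\sum_i F i) = \sum_i coef_mx (F i).
Proof.
rewrite /coef_mx; apply/matrixP => a b.
rewrite summxE !mxE summxE; apply: eq_bigr => i _; rewrite !mxE.
by [].
Qed.

Lemma sr_sum n m (I : finType) (F : I -> 'cV[C]_(n * m)) :
  (forall i, (schmidt_rank (F i) <= 1)%N) ->
  (schmidt_rank (\sum_i F i) <= #|I|)%N.
Proof.
move=> H; rewrite /schmidt_rank coef_mx_sum -sum1_card.
apply: (big_ind2 (fun (A : 'M[C]_(n, m)) r => (\rank A <= r)%N)).
- by rewrite mxrank0.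
- move=> A a B b Ha Hb; apply: leq_trans (mxrank_add A B) _.
  exact: leq_add.
- by move=> i _; apply: H.
Qed.

Lemma sr_scale n m (v : 'cV[C]_(n * m)) c :
  (schmidt_rank (c *: v) <= schmidt_rank v)%N.
Proof.
rewrite /schmidt_rank.
have -> : coef_mx (c *: v) = c *: coef_mx v.
  by apply/matrixP => a b; rewrite /coef_mx !mxE.
exact: mxrank_scale.
Qed.

Lemma lec_normc (x : C) (y : R) : (Normc.normc x <= y) = (`|x| <= y%:C).
Proof. by rewrite -normcE lecR. Qed.

Lemma normc_ge0 (x : C) : 0 <= Normc.normc x.
Proof. by rewrite -lecR normcE rmorph0. Qed.

Lemma normc_real (a : R) : Normc.normc (a%:C) = `|a|.
Proof. by rewrite /= expr0n /= addr0 sqrtr_sqr. Qed.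

Lemma conj_real (a : R) : (a%:C)^* = a%:C :> C.
Proof. by rewrite -conjcE conjc_real. Qed.

Lemma sqnorm_ge0 d (x : 'cV[C]_d) : 0 <= sqnorm x.
Proof. by apply: sumr_ge0 => l _; rewrite exprn_ge0 // normc_ge0. Qed.

Lemma sqnorm_eq0 d (x : 'cV[C]_d) : sqnorm x = 0 -> x = 0.
Proof.
move=> /eqP; rewrite psumr_eq0; last by move=> l _; rewrite exprn_ge0 // normc_ge0.
move=> /allP H; apply/matrixP => l j; rewrite (ord1 j) mxE.
have /H : l \in index_enum 'I_d by rewrite mem_index_enum.
by rewrite /= sqrf_eq0 => /eqP /Normc.eq0_normc.
Qed.

Lemma braket_ip d (w : 'cV[C]_d) X v : braket w X v = ip w (X *m v).
Proof.
rewrite /braket /ip -mulmxA mxE; apply: eq_bigr => l _.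
by rewrite !mxE conjcE.
Qed.

Lemma sqnorm_scale d (x : 'cV[C]_d) (a : R) :
  sqnorm ((a%:C) *: x) = a ^+ 2 * sqnorm x.
Proof.
apply: (@complexI R); rewrite !sqnormE rmorphM /= sqnormE.
by rewrite ip_scalel ip_scaler conj_real mulrA rmorphXn /= expr2.
Qed.

Lemma unit_entry d (w : 'cV[C]_d) l : unit_vec w -> Normc.normc (w l 0) <= 1.
Proof.
rewrite /unit_vec /sqnorm => H.
rewrite -(@expr_le1 _ 2) // ?normc_ge0 // -H.
rewrite (bigD1 l) //= lerDl; apply: sumr_ge0 => j _.
by rewrite exprn_ge0 // normc_ge0.
Qed.

Lemma norm_entry_le1 d (w : 'cV[C]_d) l : unit_vec w -> `|w l 0| <= 1.
Proof. by move=> /(unit_entry l); rewrite lec_normc rmorph1. Qed.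

Lemma braket_bound n m (X : 'M[C]_(n * m)) v w :
  unit_vec v -> unit_vec w ->
  Normc.normc (braket w X v) <= \sum_i \sum_j Normc.normc (X i j).
Proof.
move=> uv uw; rewrite lec_normc braket_ip /ip rmorph_sum.
apply: le_trans (ler_norm_sum _ _ _) _; apply: ler_sum => i _.
rewrite rmorph_sum normrM norm_conjC mxE.
apply: le_trans (ler_piMl _ (norm_entry_le1 i uw)) _ => //.
apply: le_trans (ler_norm_sum _ _ _) _; apply: ler_sum => j _.
rewrite normrM /= normcE.
by apply: ler_piMr => //; apply: norm_entry_le1.
Qed.

Definition Sset n m k (X : 'M[C]_(n * m)) : set R :=
  [set r : R | exists v w : 'cV[C]_(n * m),
         [/\ unit_vec v, unit_vec w, (schmidt_rank v <= k)%N,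
             (schmidt_rank w <= k)%N & r = Normc.normc (braket w X v)]].

Lemma normSE n m k (X : 'M[C]_(n * m)) : normS k X = sup (Sset k X).
Proof. by []. Qed.

Lemma Sset_ub n m k (X : 'M[C]_(n * m)) : has_ubound (Sset k X).
Proof.
exists (\sum_i \sum_j Normc.normc (X i j)) => r [v [w [uv uw _ _ ->]]].
exact: braket_bound.
Qed.

Lemma Sset_le n m k (X : 'M[C]_(n * m)) v w :
  unit_vec v -> unit_vec w -> (schmidt_rank v <= k)%N ->
  (schmidt_rank w <= k)%N -> Normc.normc (braket w X v) <= normS k X.
Proof.
move=> uv uw rv rw; rewrite normSE; apply: ub_le_sup; first exact: Sset_ub.
by exists v, w.
Qed.

Lemma exists_unit n m : (0 < n)%N -> (0 < m)%N ->
  exists v : 'cV[C]_(n * m), unit_vec v /\ (schmidt_rank v <= 1)%N.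
Proof.
move=> n0 m0; pose i0 : 'I_n := Ordinal n0; pose j0 : 'I_m := Ordinal m0.
exists (mxvec (delta_mx i0 j0))^T; split; last first.
  by rewrite /schmidt_rank coef_mxvec mxrank_delta.
rewrite /unit_vec; apply: (@complexI R); rewrite sqnormE ip_mxvec rmorph1.
rewrite (bigD1 i0) //= (bigD1 j0) //= !mxE !eqxx /= conj_real.
rewrite big1 ?addr0; last by move=> j /negPf ji; rewrite !mxE ji andbF mulr0.
rewrite big1 ?addr0 ?mulr1 //.
move=> i /negPf ii; apply: big1 => j _; rewrite !mxE ii /= mulr0.
by [].
Qed.

Lemma braket0 d (y : 'cV[C]_d) X : braket y X 0 = 0.
Proof. by rewrite braket_ip mulmx0 /ip big1 // => l _; rewrite mxE mulr0. Qed.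

Lemma braket0l d (x : 'cV[C]_d) X : braket 0 X x = 0.
Proof. by rewrite braket_ip /ip big1 // => l _; rewrite mxE rmorph0 mul0r. Qed.

Lemma braket_scale d (x y : 'cV[C]_d) X (a b : R) :
  braket ((b%:C) *: y) X ((a%:C) *: x) = b%:C * (a%:C * braket y X x).
Proof. by rewrite !braket_ip -scalemxAr ip_scalel ip_scaler conj_real. Qed.

Lemma normalize d (x : 'cV[C]_d) : Num.sqrt (sqnorm x) != 0 ->
  unit_vec (((Num.sqrt (sqnorm x))^-1)%:C *: x).
Proof.
move=> s0; rewrite /unit_vec sqnorm_scale exprVn sqr_sqrtr ?sqnorm_ge0 //.
apply: mulVf; apply: contra s0 => /eqP ->; by rewrite sqrtr0.
Qed.

Lemma cs_bound n m h (X : 'M[C]_(n * m)) x y :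
  (schmidt_rank x <= h)%N -> (schmidt_rank y <= h)%N ->
  Normc.normc (braket y X x) <=
    normS h X * Num.sqrt (sqnorm x) * Num.sqrt (sqnorm y).
Proof.
move=> rx ry.
have [sx0|sx0] := eqVneq (Num.sqrt (sqnorm x)) 0.
  have : sqnorm x = 0.
    by apply/eqP; rewrite eq_le sqnorm_ge0 andbT -sqrtr_eq0; apply/eqP; exact: sx0.
  move/sqnorm_eq0 => x0; rewrite sx0 x0 braket0 Normc.normc0 mulr0 mul0r.
  by [].
have [sy0|sy0] := eqVneq (Num.sqrt (sqnorm y)) 0.
  have : sqnorm y = 0.
    by apply/eqP; rewrite eq_le sqnorm_ge0 andbT -sqrtr_eq0; apply/eqP; exact: sy0.
  move/sqnorm_eq0 => y0; rewrite sy0 y0 braket0l Normc.normc0 mulr0.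
  by [].
set sx := Num.sqrt (sqnorm x) in sx0 *; set sy := Num.sqrt (sqnorm y) in sy0 *.
have sxp : 0 < sx by rewrite lt_def sx0 sqrtr_ge0.
have syp : 0 < sy by rewrite lt_def sy0 sqrtr_ge0.
have := Sset_le X (normalize sx0) (normalize sy0)
  (leq_trans (sr_scale _ _) rx) (leq_trans (sr_scale _ _) ry).
rewrite braket_scale !Normc.normcM !normc_real !ger0_norm ?invr_ge0 ?sqrtr_ge0 //.
rewrite -/sx -/sy mulrA -invfM mulrC ler_pdivrMr ?mulr_gt0 //.
by rewrite (mulrC sy sx) mulrA.
Qed.

Lemma amgm (a b : R) : a * b <= (a ^+ 2 + b ^+ 2) / 2.
Proof.
have := sqr_ge0 (a - b); rewrite sqrrB addrAC subr_ge0 => H.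
by rewrite ler_pdivlMr // mulr_natr.
Qed.

Lemma sum_sqrt_bound k (p q : 'I_k -> R) (P Q : R) :
  (forall a, 0 <= p a) -> (forall b, 0 <= q b) ->
  \sum_a p a = P -> \sum_b q b = Q ->
  \sum_b \sum_a Num.sqrt (p a) * Num.sqrt (q b) <= k%:R * (P + Q) / 2.
Proof.
move=> p0 q0 sP sQ.
apply: le_trans (_ : \sum_(b < k) \sum_(a < k) (p a / 2 + q b / 2) <= _).
  apply: ler_sum => b _; apply: ler_sum => a _.
  apply: le_trans (amgm _ _) _.
  by rewrite !sqr_sqrtr // mulrDl.
rewrite (eq_bigr (fun b => P / 2 + (q b / 2) *+ k)); last first.
  by move=> b _; rewrite big_split /= -mulr_suml sP sumr_const card_ord.
rewrite big_split /= sumr_const card_ord sumrMnl -mulr_suml sQ.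
have -> : P / 2 *+ k + Q / 2 *+ k = k%:R * (P + Q) / 2.
  by rewrite -[P / 2 *+ k]mulr_natl -[Q / 2 *+ k]mulr_natl -mulrDr -mulrA mulrDl.
exact: lexx.
Qed.

Lemma normc_sum (I : finType) (F : I -> C) :
  Normc.normc (\sum_i F i) <= \sum_i Normc.normc (F i).
Proof.
rewrite lec_normc rmorph_sum; apply: le_trans (ler_norm_sum _ _ _) _.
by apply: ler_sum => i _; rewrite /= normcE.
Qed.

Lemma main_bound n m h k (X : 'M[C]_(n * m)) v w :
  (0 < h)%N -> (h <= k)%N -> 0 <= normS h X ->
  unit_vec v -> unit_vec w -> (schmidt_rank v <= k)%N ->
  (schmidt_rank w <= k)%N ->
  Normc.normc (braket w X v) <= k%:R / h%:R * normS h X.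
Proof.
move=> h0 hk N0 uv uw rv rw.
have kp : (0 < k)%N := leq_trans h0 hk.
have [tv [tv1 vE tvo]] := decomp_vec rv.
have [tw [tw1 wE two]] := decomp_vec rw.
pose va a := \sum_(i < h) tv (rot kp a i).
pose wb b := \sum_(i < h) tw (rot kp b i).
have rva a : (schmidt_rank (va a) <= h)%N.
  by have := @sr_sum n m _ (fun i : 'I_h => tv (rot kp a i)) (fun i => tv1 _); rewrite card_ord.
have rwb b : (schmidt_rank (wb b) <= h)%N.
  by have := @sr_sum n m _ (fun i : 'I_h => tw (rot kp b i)) (fun i => tw1 _); rewrite card_ord.
have sumv : \sum_a va a = h%:R *: v by rewrite vE window_sum.
have sumw : \sum_b wb b = h%:R *: w by rewrite wE window_sum.
have sqv : \sum_a sqnorm (va a) = h%:R.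
  apply: (@complexI R); rewrite rmorph_sum /=.
  rewrite (eq_bigr (fun a => ip (va a) (va a))); last by move=> a _; rewrite sqnormE.
  rewrite window_ip // -vE -sqnormE uv rmorph1 mulr1 rmorph_nat.
  by [].
have sqw : \sum_b sqnorm (wb b) = h%:R.
  apply: (@complexI R); rewrite rmorph_sum /=.
  rewrite (eq_bigr (fun a => ip (wb a) (wb a))); last by move=> a _; rewrite sqnormE.
  rewrite window_ip // -wE -sqnormE uw rmorph1 mulr1 rmorph_nat.
  by [].
set N := normS h X in N0 *.
set B := braket w X v.
have E : (h%:R)%:C * ((h%:R)%:C * B) = \sum_b \sum_a braket (wb b) X (va a).
  rewrite /B -braket_scale rmorph_nat -sumv -sumw.
  rewrite braket_ip mulmx_sumr ip_suml; apply: eq_bigr => b _.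
  by rewrite ip_sumr; apply: eq_bigr => a _; rewrite braket_ip.
have nE : Normc.normc ((h%:R)%:C * ((h%:R)%:C * B)) =
    h%:R * (h%:R * Normc.normc B).
  by rewrite !Normc.normcM normc_real ger0_norm.
have key : h%:R * (h%:R * Normc.normc B) <= N * (k%:R * (h%:R + h%:R) / 2).
  rewrite -nE E; apply: le_trans (normc_sum _) _.
  apply: le_trans (_ : \sum_b \sum_a Normc.normc (braket (wb b) X (va a)) <= _).
    by apply: ler_sum => b _; apply: normc_sum.
  apply: le_trans (_ : \sum_b \sum_a N * (Num.sqrt (sqnorm (va a)) *
                          Num.sqrt (sqnorm (wb b))) <= _).
    apply: ler_sum => b _; apply: ler_sum => a _.
    by rewrite mulrA; apply: cs_bound.
  rewrite (eq_bigr (fun b => N * \sum_a (Num.sqrt (sqnorm (va a)) *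
                          Num.sqrt (sqnorm (wb b))))); last first.
    by move=> b _; rewrite mulr_sumr.
  rewrite -mulr_sumr; apply: ler_wpM2l => //.
  apply: sum_sqrt_bound => // a; exact: sqnorm_ge0.
have hp : (0 : R) < h%:R by rewrite ltr0n.
rewrite -(ler_pM2l hp) -(ler_pM2l hp); apply: le_trans key _.
rewrite le_eqVlt; apply/orP; left; apply/eqP.
field; by rewrite lt0r_neq0.
Qed.
End Dec.

Local Close Scope sesquilinear_scope.

Theorem theorem4p13 (R : realType) (n m h k : nat)
  (hmn : (m <= n)%N) (h1 : (1 <= h)%N) (hhk : (h <= k)%N) (hkm : (k <= m)%N)
  (X : 'M[R[i]]_(n * m)) :
  normS h X <= normS k X <= (k%:R / h%:R) * normS h X.
Proof.
have m0 : (0 < m)%N := leq_trans h1 (leq_trans hhk hkm).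
have n0 : (0 < n)%N := leq_trans m0 hmn.
have [v [uv rv]] := exists_unit R n0 m0.
have nonemp j : (1 <= j)%N -> (Sset j X !=set0)%classic.
  move=> j1; exists (Normc.normc (braket v X v)); exists v, v; split => //.
  - exact: leq_trans rv j1.
  - exact: leq_trans rv j1.
have N0 : 0 <= normS h X.
  apply: le_trans (normc_ge0 (braket v X v)) _.
  by apply: Sset_le => //; apply: leq_trans rv h1.
apply/andP; split.
  rewrite [X in X <= _]normSE; apply: ge_sup; first exact: nonemp.
  move=> r [x [y [ux uy rx ry ->]]].
  apply: Sset_le => //; exact: leq_trans hhk.
rewrite [X in X <= _]normSE; apply: ge_sup; first exact: nonemp (leq_trans h1 hhk).
move=> r [x [y [ux uy rx ry ->]]].
exact: main_bound.
Qed.
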